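(* Let $E/F$ be a degree-4 datum (notation $\rho,\zeta,v,u,L,\theta$ as below), let $\xi_\alpha,\xi_\beta,\xi_\gamma\in\mathbb Z/2\mathbb Z$ with $\xi_\alpha+\xi_\beta+\xi_\gamma=0$, and let $l\in\{0,1\}$ with $l\equiv\xi_\beta\pmod 2$ (so $\rho^l|_L=\rho^{l+2}|_L=\theta^{\xi_\beta}$). Let $Q$ be the quiver with vertices $1,2,3$ and arrows $\alpha:2\to1$, $\beta_0,\beta_1:3\to2$, $\gamma:1\to3$, with fields $F_1=L$, $F_2=F_3=E$ and bimodules $A_\alpha=L^{\theta^{\xi_\alpha}}\otimes_LE$, $A_{\beta_0}=E^{\rho^l}\otimes_EE$, $A_{\beta_1}=E^{\rho^{l+2}}\otimes_EE$, $A_\gamma=E^{\theta^{\xi_\gamma}}\otimes_LL$. Let $$\Lambda'=T_R(A)\big/\big\langle (\beta_0+\beta_1)\gamma,\ \tfrac12(\gamma\alpha+\rho^{-l}(v^{-1})\gamma\alpha v),\ \tfrac12(\gamma\alpha+\rho^{-l-2}(v^{-1})\gamma\alpha v),\ \alpha(\beta_0+\beta_1)\big\rangle$$ (here $v$ on the right is $ve_2\in F_2$ and $\rho^{-l}(v^{-1})$, $\rho^{-l-2}(v^{-1})$ lie in $F_3$). Let $\widehat Q$ be the quiver with vertices $1,2,3$, arrows $\alpha:2\to1$, $\beta:3\to2$, $\gamma:1\to3$ and loops $s_2$ at $2$, $s_3$ at $3$; let $K=L$, $\sigma_\alpha=\theta^{\xi_\alpha}$, $\sigma_\beta=\theta^{\xi_\beta}$,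 $\sigma_\gamma=\theta^{\xi_\gamma}$, $\sigma_{s_2}=\sigma_{s_3}=1_L$, and $\Lambda=L_{\boldsymbol\sigma}\widehat Q/\langle\alpha\beta,\beta\gamma,\gamma\alpha,\ s_2^2-ue_2,\ s_3^2-ue_3\rangle$. Then $\Lambda'$ and $\Lambda$ are isomorphic as $F$-algebras (via an isomorphism sending $ve_2\mapsto s_2$, $ve_3\mapsto s_3$, $\alpha\mapsto\alpha$, $\gamma\mapsto\gamma$, $\beta_0+\beta_1\mapsto\beta$).
   Context: Degree-4 datum: a cyclic Galois extension $E/F$ of degree 4 with $F$ containing a primitive 4th root of unity $\zeta$; $\rho$ is a generator of $\operatorname{Gal}(E/F)$, $v\in E\setminus\{0\}$ satisfies $\rho(v)=\zeta v$, $u:=v^2$, $L:=F(u)$ is the unique intermediate field with $[L:F]=2$, and $\theta:=\rho|_L$ generates $\operatorname{Gal}(L/F)$. Twisted bimodules: for fields $K'''\subseteq K',K''$ and an automorphism $g$ of $K'''$, $K'^{g}\otimes_{K'''}K''$ is the $K'$-$K''$-bimodule where $K'^g$ is $K'$ with left multiplication and right action $m\star z=m\,g(z)$. Tensor ring of a species: for a quiver $Q$ with fields $F_i$ at vertices and bimodules $A_a=F_{h(a)}^{g_a}\otimes_{F_{h(a)}\cap F_{t(a)}}F_{t(a)}$ for arrows $a:t(a)\to h(a)$, $R=\prod_iF_i$ (idempotents $e_i$), $A=\bigoplus_aA_a$, $T_R(A)=\bigoplus_{n\ge0}A^{\otimes_Rn}$. The symbol $a$ denotes $1\otimes1\in A_a$;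 products are written right-to-left ($ab$ = $b$ then $a$); $az=g_a(z)a$ for $z\in F_{h(a)}\cap F_{t(a)}$; field elements adjacent to arrows are elements of $R$ at the corresponding vertex. $\langle X\rangle$ is the two-sided ideal generated by $X$. Semilinear path algebra: for a quiver $\widehat Q$, a field $K$ and $\sigma_b\in\operatorname{Gal}(K/F)$ for arrows $b$, $K_{\boldsymbol\sigma}\widehat Q$ is the ring generated by $S=\prod_{i\in\widehat Q_0}K$ (idempotents $e_i$) and arrows $b=e_{h(b)}be_{t(b)}$ subject to $b\lambda=\sigma_b(\lambda)b$ for $\lambda\in K$ (the tensor ring over $S$ of $\bigoplus_bK^{\sigma_b}\otimes_KK$); products right-to-left. *)

(* Defs.v *)
From HB Require Import structures.
From mathcomp Require Import all_boot all_order all_algebra all_fingroup all_field.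
Set Implicit Arguments. Unset Strict Implicit. Unset Printing Implicit Defensive.
Import GRing.Theory.
Local Open Scope ring_scope.

Definition falg_hom (F : fieldType) (A B : algType F) (f : A -> B) : Prop :=
  [/\ forall x y, f (x + y) = f x + f y,
      forall x y, f (x * y) = f x * f y,
      f 1 = 1 &
      forall (c : F) x, f (c *: x) = c *: f x].

Definition degree4_datum (F : fieldType) (E : splittingFieldType F)
    (rho : gal_of (fullv : {vspace E})) (zeta : F) (v : E) : Prop :=
  [/\ galois 1%VS (fullv : {vspace E}), \dim (fullv : {vspace E}) = 4%N &
      ('Gal((fullv : {vspace E}) / 1%VS) = <[rho]>)%g] /\
  [/\ 4.-primitive_root zeta, v != 0 & rho v = zeta%:A * v].

Definition uu (F : fieldType) (E : splittingFieldType F) (v : E) : E := v ^+ 2.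
Definition LL (F : fieldType) (E : splittingFieldType F) (v : E) : {vspace E} :=
  <<1%VS; uu v>>%VS.

(* A unital F-linear ring map from the vertex field K (subfield of E) into C;
   only its values on K matter.  phi 1 is the vertex idempotent. *)
Definition vertex_map (F : fieldType) (E : splittingFieldType F)
    (K : {vspace E}) (C : algType F) (phi : E -> C) : Prop :=
  [/\ {in K &, forall x y, phi (x + y) = phi x + phi y},
      {in K &, forall x y, phi (x * y) = phi x * phi y} &
      forall c : F, phi (c%:A) = c *: phi 1].

Definition complete_idems (F : fieldType) (C : algType F) (e1 e2 e3 : C) : Prop :=
  [/\ e1 * e2 = 0, e1 * e3 = 0, e2 * e1 = 0 & e2 * e3 = 0] /\
  [/\ e3 * e1 = 0, e3 * e2 = 0 & e1 + e2 + e3 = 1].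

(* Images of the generators of Lambda' in an F-algebra C:
   vertex fields F_1 = L, F_2 = F_3 = E, arrows alpha, beta0, beta1, gamma. *)
Record gens1 (F : fieldType) (E : splittingFieldType F) (C : algType F) := Gens1 {
  p1 : E -> C; p2 : E -> C; p3 : E -> C;
  ar_a : C; ar_b0 : C; ar_b1 : C; ar_g : C }.

Definition rels1 (F : fieldType) (E : splittingFieldType F) (rho : gal_of (fullv : {vspace E}))
    (v : E) (xa xb xg : 'Z_2) (l : nat) (C : algType F) (d : gens1 E C) : Prop :=
  let L := LL v in
  let e1 := p1 d 1 in let e2 := p2 d 1 in let e3 := p3 d 1 in
  let a := ar_a d in let b0 := ar_b0 d in let b1 := ar_b1 d in let g := ar_g d in
  [/\ [/\ vertex_map L (p1 d), vertex_map (fullv : {vspace E}) (p2 d), vertex_map (fullv : {vspace E}) (p3 d)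
        & complete_idems e1 e2 e3],
      [/\ a = e1 * a * e2, b0 = e2 * b0 * e3, b1 = e2 * b1 * e3 & g = e3 * g * e1],
      [/\ {in L, forall z, a * p2 d z = p1 d ((rho ^+ xa)%g z) * a},
          forall z, b0 * p3 d z = p2 d ((rho ^+ l)%g z) * b0,
          forall z, b1 * p3 d z = p2 d ((rho ^+ (l + 2))%g z) * b1 &
          {in L, forall z, g * p1 d z = p3 d ((rho ^+ xg)%g z) * g}] &
      [/\ (b0 + b1) * g = 0,
          p3 d (2%:R^-1) * (g * a + p3 d (((rho ^+ l)^-1)%g (v^-1)) * g * a * p2 d v) = 0,
          p3 d (2%:R^-1) * (g * a + p3 d (((rho ^+ (l + 2))^-1)%g (v^-1)) * g * a * p2 d v) = 0
        & a * (b0 + b1) = 0]].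

Definition agree1 (F : fieldType) (E : splittingFieldType F) (v : E)
    (B C : algType F) (h : B -> C) (dB : gens1 E B) (dC : gens1 E C) : Prop :=
  [/\ {in LL v, forall x, h (p1 dB x) = p1 dC x},
      forall x, h (p2 dB x) = p2 dC x,
      forall x, h (p3 dB x) = p3 dC x &
      [/\ h (ar_a dB) = ar_a dC, h (ar_b0 dB) = ar_b0 dC,
          h (ar_b1 dB) = ar_b1 dC & h (ar_g dB) = ar_g dC]].

(* (B, dB) is the F-algebra presented by the generators and relations of Lambda'
   (universal property of T_R(A)/I). *)
Definition is_Lambda' (F : fieldType) (E : splittingFieldType F) (rho : gal_of (fullv : {vspace E}))
    (v : E) (xa xb xg : 'Z_2) (l : nat) (B : algType F) (dB : gens1 E B) : Prop :=
  rels1 rho v xa xb xg l dB /\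
  forall (C : algType F) (dC : gens1 E C), rels1 rho v xa xb xg l dC ->
    (exists h : B -> C, falg_hom h /\ agree1 v h dB dC) /\
    (forall h1 h2 : B -> C, falg_hom h1 -> agree1 v h1 dB dC ->
        falg_hom h2 -> agree1 v h2 dB dC -> h1 =1 h2).

Record gens2 (F : fieldType) (E : splittingFieldType F) (C : algType F) := Gens2 {
  q1 : E -> C; q2 : E -> C; q3 : E -> C;
  br_a : C; br_b : C; br_g : C; br_s2 : C; br_s3 : C }.

Definition rels2 (F : fieldType) (E : splittingFieldType F) (rho : gal_of (fullv : {vspace E}))
    (v : E) (xa xb xg : 'Z_2) (C : algType F) (d : gens2 E C) : Prop :=
  let L := LL v in
  let e1 := q1 d 1 in let e2 := q2 d 1 in let e3 := q3 d 1 in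
  let a := br_a d in let b := br_b d in let g := br_g d in
  let s2 := br_s2 d in let s3 := br_s3 d in
  [/\ [/\ vertex_map L (q1 d), vertex_map L (q2 d), vertex_map L (q3 d)
        & complete_idems e1 e2 e3],
      [/\ a = e1 * a * e2, b = e2 * b * e3, g = e3 * g * e1,
          s2 = e2 * s2 * e2 & s3 = e3 * s3 * e3],
      [/\ {in L, forall z, a * q2 d z = q1 d ((rho ^+ xa)%g z) * a},
          {in L, forall z, b * q3 d z = q2 d ((rho ^+ xb)%g z) * b},
          {in L, forall z, g * q1 d z = q3 d ((rho ^+ xg)%g z) * g},
          {in L, forall z, s2 * q2 d z = q2 d z * s2} &
          {in L, forall z, s3 * q3 d z = q3 d z * s3}] &
      [/\ a * b = 0, b * g = 0, g * a = 0,
          s2 * s2 - q2 d (uu v) = 0 & s3 * s3 - q3 d (uu v) = 0]].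

Definition agree2 (F : fieldType) (E : splittingFieldType F) (v : E)
    (B C : algType F) (h : B -> C) (dB : gens2 E B) (dC : gens2 E C) : Prop :=
  [/\ {in LL v, forall x, h (q1 dB x) = q1 dC x},
      {in LL v, forall x, h (q2 dB x) = q2 dC x},
      {in LL v, forall x, h (q3 dB x) = q3 dC x} &
      [/\ h (br_a dB) = br_a dC, h (br_b dB) = br_b dC, h (br_g dB) = br_g dC,
          h (br_s2 dB) = br_s2 dC & h (br_s3 dB) = br_s3 dC]].

Definition is_Lambda (F : fieldType) (E : splittingFieldType F) (rho : gal_of (fullv : {vspace E}))
    (v : E) (xa xb xg : 'Z_2) (B : algType F) (dB : gens2 E B) : Prop :=
  rels2 rho v xa xb xg dB /\
  forall (C : algType F) (dC : gens2 E C), rels2 rho v xa xb xg dC ->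
    (exists h : B -> C, falg_hom h /\ agree2 v h dB dC) /\
    (forall h1 h2 : B -> C, falg_hom h1 -> agree2 v h1 dB dC ->
        falg_hom h2 -> agree2 v h2 dB dC -> h1 =1 h2).

(* Main.v *)
Require Import Defs.
From HB Require Import structures.
From mathcomp Require Import all_boot all_order all_algebra all_fingroup all_field.
From mathcomp Require Import ring.
Import GRing.Theory.
Local Open Scope ring_scope.
Set Implicit Arguments. Unset Strict Implicit. Unset Printing Implicit Defensive.


Lemma core4 (K : fieldType) (Z v A0 A1 A2 A3 : K) : v != 0 -> (4%:R : K) != 0 ->
  Z ^+ 2 + 1 = 0 ->
  (forall j, A0 + A1 * (Z^+j * v) + A2 * (Z^+j * v) ^+ 2 + A3 * (Z^+j * v) ^+ 3 = 0) ->
  A0 = 0 /\ A1 = 0 /\ A2 = 0 /\ A3 = 0.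
Proof.
move=> vnz fnz hZ Sj.
have S0 : A0 + A1 * v + A2 * v ^+ 2 + A3 * v ^+ 3 = 0.
  by rewrite -(Sj 0%N) expr0 !mul1r.
have S1 : A0 + Z * A1 * v - A2 * v ^+ 2 - Z * A3 * v ^+ 3 = 0.
  have -> : A0 + Z * A1 * v - A2 * v ^+ 2 - Z * A3 * v ^+ 3 =
     (A0 + A1 * (Z^+1 * v) + A2 * (Z^+1 * v) ^+ 2 + A3 * (Z^+1 * v) ^+ 3)
     - (Z^+2 + 1) * (A2 * v^+2 + A3 * Z * v^+3) by ring.
  by rewrite (Sj _) hZ mul0r subr0.
have S2 : A0 - A1 * v + A2 * v ^+ 2 - A3 * v ^+ 3 = 0.
  have -> : A0 - A1 * v + A2 * v ^+ 2 - A3 * v ^+ 3 =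
     (A0 + A1 * (Z^+2 * v) + A2 * (Z^+2 * v) ^+ 2 + A3 * (Z^+2 * v) ^+ 3)
     - (Z^+2 + 1) * (A1 * v + A2 * v^+2 * (Z^+2 - 1) + A3 * v^+3 * (Z^+4 - Z^+2 + 1)) by ring.
  by rewrite (Sj _) hZ mul0r subr0.
have S3 : A0 - Z * A1 * v - A2 * v ^+ 2 + Z * A3 * v ^+ 3 = 0.
  have -> : A0 - Z * A1 * v - A2 * v ^+ 2 + Z * A3 * v ^+ 3 =
     (A0 + A1 * (Z^+3 * v) + A2 * (Z^+3 * v) ^+ 2 + A3 * (Z^+3 * v) ^+ 3)
     - (Z^+2 + 1) * (A1 * v * Z + A2 * v^+2 * (Z^+4 - Z^+2 + 1) + A3 * v^+3 * Z * (Z^+2 - 1) * (Z^+4 + 1)) by ring.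
  by rewrite (Sj _) hZ mul0r subr0.
have S0' := S0.
have e0 : 4%:R * A0 = 0.
  have -> : 4%:R * A0 = (A0 + A1 * v + A2 * v ^+ 2 + A3 * v ^+ 3) + (A0 + Z * A1 * v - A2 * v ^+ 2 - Z * A3 * v ^+ 3)
     + (A0 - A1 * v + A2 * v ^+ 2 - A3 * v ^+ 3) + (A0 - Z * A1 * v - A2 * v ^+ 2 + Z * A3 * v ^+ 3) by ring.
  by rewrite S0 S1 S2 S3 !addr0.
have e2 : 4%:R * A2 * v ^+ 2 = 0.
  have -> : 4%:R * A2 * v ^+ 2 = (A0 + A1 * v + A2 * v ^+ 2 + A3 * v ^+ 3) - (A0 + Z * A1 * v - A2 * v ^+ 2 - Z * A3 * v ^+ 3)
     + (A0 - A1 * v + A2 * v ^+ 2 - A3 * v ^+ 3) - (A0 - Z * A1 * v - A2 * v ^+ 2 + Z * A3 * v ^+ 3) by ring.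
  by rewrite S0 S1 S2 S3 !subr0 addr0.
have e1 : 4%:R * A1 * v = 0.
  have -> : 4%:R * A1 * v = (A0 + A1 * v + A2 * v ^+ 2 + A3 * v ^+ 3) - Z * (A0 + Z * A1 * v - A2 * v ^+ 2 - Z * A3 * v ^+ 3)
     - (A0 - A1 * v + A2 * v ^+ 2 - A3 * v ^+ 3) + Z * (A0 - Z * A1 * v - A2 * v ^+ 2 + Z * A3 * v ^+ 3)
     - (Z^+2 + 1) * (2%:R * A3 * v^+3 - 2%:R * A1 * v) by ring.
  by rewrite S0 S1 S2 S3 hZ !mulr0 !mul0r !subr0 addr0.
have e3 : 4%:R * A3 * v ^+ 3 = 0.
  have -> : 4%:R * A3 * v ^+ 3 = (A0 + A1 * v + A2 * v ^+ 2 + A3 * v ^+ 3) + Z * (A0 + Z * A1 * v - A2 * v ^+ 2 - Z * A3 * v ^+ 3)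
     - (A0 - A1 * v + A2 * v ^+ 2 - A3 * v ^+ 3) - Z * (A0 - Z * A1 * v - A2 * v ^+ 2 + Z * A3 * v ^+ 3)
     - (Z^+2 + 1) * (2%:R * A1 * v - 2%:R * A3 * v^+3) by ring.
  by rewrite S0 S1 S2 S3 hZ !mulr0 !mul0r !subr0 addr0.
move/eqP: e0; rewrite mulf_eq0 (negPf fnz) => /eqP ->.
move/eqP: e1; rewrite !mulf_eq0 (negPf fnz) (negPf vnz) orbF => /eqP ->.
move/eqP: e2; rewrite mulf_eq0 expf_eq0 (negPf vnz) andbF orbF mulf_eq0 (negPf fnz) => /eqP ->.
move/eqP: e3; rewrite mulf_eq0 expf_eq0 (negPf vnz) andbF orbF mulf_eq0 (negPf fnz) => /eqP ->.
done.
Qed.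

Section Datum.
Variables (F : fieldType) (E : splittingFieldType F) (rho : gal_of (fullv : {vspace E})) (zeta : F) (v : E).
Hypothesis datum : degree4_datum rho zeta v.

Lemma zeta2 : zeta ^+ 2 = -1.
Proof.
have [_ [pz _ _]] := datum.
have z4 : zeta ^+ 4 = 1 by apply: prim_expr_order.
have z2 : zeta ^+ 2 != 1.
  by rewrite -[X in _ != X](expr0 zeta) (eq_prim_root_expr pz).
have : (zeta ^+ 2 - 1) * (zeta ^+ 2 + 1) = 0.
  by rewrite mulrDr mulr1 mulrBl mul1r -exprD /= z4 addrA subrK subrr.
move/eqP; rewrite mulf_eq0 subr_eq0 (negPf z2) /= addr_eq0 => /eqP //.
Qed.

Lemma two_nz : (2%:R : F) != 0.
Proof.
apply/negP => /eqP h2.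
have [_ [pz _ _]] := datum.
have : zeta ^+ 2 != 1.
  by rewrite -[X in _ != X](expr0 zeta) (eq_prim_root_expr pz).
by rewrite zeta2 eq_sym -addr_eq0 -mulr2n h2 eqxx.
Qed.

Lemma v_nz : v != 0. Proof. by have [_ [_ ? _]] := datum. Qed.
Lemma zeta_nz : zeta != 0.
Proof. apply/negP=> /eqP z0; have := zeta2; rewrite z0 expr0n /= => /eqP; rewrite eq_sym oppr_eq0 oner_eq0. done. Qed.

Lemma rhov : rho v = zeta%:A * v.
Proof. by have [_ [_ _ ->]] := datum. Qed.

Lemma rhoS k x : (rho ^+ k.+1)%g x = (rho ^+ k)%g (rho x).
Proof. by rewrite expgS galM ?memvf. Qed.

Lemma gal_alg (g : gal_of (fullv : {vspace E})) (c : F) : g c%:A = c%:A.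
Proof. by rewrite linearZ /= rmorph1. Qed.

Lemma gal_scale (g : gal_of (fullv : {vspace E})) (c : F) x : g (c *: x) = c *: g x.
Proof. by rewrite linearZ. Qed.

Lemma galMul (g : gal_of (fullv : {vspace E})) x y : g (x * y) = g x * g y.
Proof. exact: rmorphM. Qed.

Lemma galD (g : gal_of (fullv : {vspace E})) x y : g (x + y) = g x + g y.
Proof. exact: rmorphD. Qed.
Lemma galX (g : gal_of (fullv : {vspace E})) x n : g (x ^+ n) = g x ^+ n.
Proof. exact: rmorphXn. Qed.
Lemma gal0 (g : gal_of (fullv : {vspace E})) : g 0 = 0.
Proof. exact: rmorph0. Qed.

Lemma rhoXv k : (rho ^+ k)%g v = (zeta ^+ k)%:A * v.
Proof.
elim: k => [|k IH]; first by rewrite expg0 gal_id expr0 scale1r mul1r.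
by rewrite rhoS rhov galMul gal_alg IH !mulr_algl scalerA -exprS.
Qed.


Definition Xv : 4.-tuple E := [tuple v ^+ i | i < 4].

Lemma Xnth (i : 'I_4) : Xv`_i = v ^+ i.
Proof. by rewrite -tnth_nth tnth_mktuple. Qed.

Lemma inalgX (c : F) j : (c ^+ j)%:A = (c%:A : E) ^+ j.
Proof. exact: (rmorphXn (in_alg E)). Qed.

Lemma four_nz : (4%:R : E) != 0.
Proof.
have -> : (4%:R : E) = (2%:R * 2%:R : F)%:A by rewrite -natrM scaler_nat.
by rewrite scaler_eq0 oner_eq0 orbF mulf_neq0 // two_nz.
Qed.

Lemma alg_eq0 (c : F) : ((c%:A : E) == 0) = (c == 0).
Proof. by rewrite scaler_eq0 oner_eq0 orbF. Qed.

Lemma free_Xv : free Xv.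
Proof.
apply/freeP => k; rewrite !big_ord_recl big_ord0 addr0 !Xnth /=.
set a0 := k ord0; set a1 := k (lift ord0 ord0); set a2 := k (lift ord0 (lift ord0 ord0)).
set a3 := k (lift ord0 (lift ord0 (lift ord0 ord0))).
rewrite -[a0 *: _]mulr_algl -[a1 *: _]mulr_algl -[a2 *: _]mulr_algl -[a3 *: _]mulr_algl expr0 expr1 mulr1.
move=> S0.
have {}S0 : a0%:A + a1%:A * v + a2%:A * v ^+ 2 + a3%:A * v ^+ 3 = 0 :> E.
  by rewrite -[RHS]S0 !addrA.
have Sj j : a0%:A + a1%:A * ((zeta%:A)^+j * v) + a2%:A * ((zeta%:A)^+j * v) ^+ 2
     + a3%:A * ((zeta%:A)^+j * v) ^+ 3 = 0 :> E.
  have := congr1 (rho ^+ j)%g S0.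
  by rewrite !galD !galMul !gal_alg rhoXv gal0 inalgX => <-; ring.
have hZ : (zeta%:A : E) ^+ 2 + 1 = 0 by rewrite -inalgX zeta2 scaleN1r addNr.
have [h0 [h1 [h2 h3]]] := core4 v_nz four_nz hZ Sj.
move/eqP: h0; rewrite alg_eq0 => /eqP h0.
move/eqP: h1; rewrite alg_eq0 => /eqP h1.
move/eqP: h2; rewrite alg_eq0 => /eqP h2.
move/eqP: h3; rewrite alg_eq0 => /eqP h3.
case=> [[|[|[|[|//]]]] Hi].
- by rewrite -h0; congr k; apply: val_inj.
- by rewrite -h1; congr k; apply: val_inj.
- by rewrite -h2; congr k; apply: val_inj.
- by rewrite -h3; congr k; apply: val_inj.
Qed.


Lemma basisX : basis_of fullv Xv.
Proof.
have [[_ hd _] _] := datum.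
by rewrite basisEfree free_Xv subvf hd size_tuple.
Qed.

Lemma coordE x : x = \sum_(i < 4) coord Xv i x *: v ^+ i.
Proof.
rewrite {1}(coord_basis basisX (memvf x)); apply: eq_bigr => i _; by rewrite Xnth.
Qed.

Lemma coord_comb (c : 'I_4 -> F) j : coord Xv j (\sum_(i < 4) c i *: v ^+ i) = c j.
Proof.
have -> : \sum_(i < 4) c i *: v ^+ i = \sum_(i < 4) c i *: Xv`_i.
  by apply: eq_bigr => i _; rewrite Xnth.
exact: coord_sum_free free_Xv.
Qed.

Lemma rho_expand k x :
  (rho ^+ k)%g x = \sum_(i < 4) (coord Xv i x * (zeta ^+ k) ^+ i) *: v ^+ i.
Proof.
rewrite {1}(coordE x) linear_sum; apply: eq_bigr => i _.
by rewrite linearZ /= galX rhoXv exprMn -inalgX mulr_algl scalerA.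
Qed.

Lemma coord_rho k x i : coord Xv i ((rho ^+ k)%g x) = coord Xv i x * (zeta ^+ k) ^+ i.
Proof. by rewrite rho_expand coord_comb. Qed.

Lemma v4F : exists c : F, v ^+ 4 = c%:A.
Proof.
have [[gal _ hG] [pz _ _]] := datum.
have hf := galois_fixedField gal.
have : v ^+ 4 \in fixedField ('Gal(fullv / 1%VS))%g.
  apply/fixedFieldP; first exact: memvf.
  move=> x; rewrite hG => /cycleP [k ->].
  rewrite galX rhoXv exprMn -inalgX -exprM mulnC exprM (prim_expr_order pz).
  by rewrite expr1n scale1r mul1r.
rewrite hf => /vlineP [c ->]; by exists c.
Qed.

Lemma L1 : 1 \in LL v.
Proof. rewrite /LL; apply: (subvP (subv_adjoin _ _)); exact: memv_line. Qed.

Lemma Lu : uu v \in LL v.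
Proof. exact: memv_adjoin. Qed.

Lemma tau_L z : z \in LL v -> (rho ^+ 2)%g z = z.
Proof.
move=> Lz.
have : (LL v <= fixedField [set (rho ^+ 2)%g])%VS.
  apply/FadjoinP; split; first exact: sub1v.
  apply/fixedFieldP; first exact: memvf.
  move=> x; rewrite inE => /eqP ->.
  by rewrite /uu galX rhoXv exprMn -inalgX zeta2 sqrrN expr1n scale1r mul1r.
by move/subvP/(_ z Lz)/mem_fixedFieldP => [_]; apply; rewrite inE.
Qed.

Lemma L_decomp z : z \in LL v -> exists c0 c2 : F, z = c0%:A + c2 *: v ^+ 2.
Proof.
move=> Lz.
have e i : coord Xv i z * (-1) ^+ i = coord Xv i z.
  by rewrite -zeta2 -coord_rho tau_L.
have odd0 (c : F) : c * (-1) ^+ 1 = c -> c = 0.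
  rewrite expr1 mulrN1 => h.
  have : (2%:R : F) * c = 0 by rewrite mulr2n mulrDl mul1r -{1}h addNr.
  by move/eqP; rewrite mulf_eq0 (negPf two_nz) => /eqP.
have c1 := odd0 _ (e (lift ord0 ord0)).
have c3 : coord Xv (lift ord0 (lift ord0 (lift ord0 ord0))) z = 0.
  have := e (lift ord0 (lift ord0 (lift ord0 ord0))); rewrite /= exprS expr2 mulrN1 mulN1r opprK.
  by apply: odd0; rewrite expr1 mulrN1.
exists (coord Xv ord0 z), (coord Xv (lift ord0 (lift ord0 ord0)) z).
rewrite {1}(coordE z) !big_ord_recl big_ord0 /= c1 c3 !scale0r !addr0 add0r.
by rewrite expr0.
Qed.

End Datum.



Section VM.
Variables (F : fieldType) (E : splittingFieldType F) (C : algType F) (psi : E -> C).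
Hypothesis hpsi : vertex_map (fullv : {vspace E}) psi.

Lemma vmD x y : psi (x + y) = psi x + psi y.
Proof. by case: hpsi => h _ _; apply: h; apply: memvf. Qed.
Lemma vmM x y : psi (x * y) = psi x * psi y.
Proof. by case: hpsi => _ h _; apply: h; apply: memvf. Qed.
Lemma vmA c : psi c%:A = c *: psi 1.
Proof. by case: hpsi. Qed.
Lemma vm0 : psi 0 = 0.
Proof. have h := vmD 0 0; rewrite addr0 in h; apply: (@addrI _ (psi 0)); by rewrite addr0 -h. Qed.
Lemma vmN x : psi (- x) = - psi x.
Proof. by apply/eqP; rewrite -subr_eq0 opprK -vmD addNr vm0. Qed.
Lemma vm1l x : psi 1 * psi x = psi x.
Proof. by rewrite -vmM mul1r. Qed.
Lemma vm1r x : psi x * psi 1 = psi x.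
Proof. by rewrite -vmM mulr1. Qed.
Lemma vmZ c x : psi (c *: x) = c *: psi x.
Proof. by rewrite -mulr_algl vmM vmA -scalerAl vm1l. Qed.
Lemma vm_sum n (f : 'I_n -> E) : psi (\sum_(i < n) f i) = \sum_(i < n) psi (f i).
Proof. exact: (big_morph psi vmD vm0). Qed.
Lemma vmX x i : psi (x ^+ i) = psi 1 * psi x ^+ i.
Proof.
elim: i => [|i IH]; first by rewrite !expr0 mulr1.
by rewrite exprSr vmM IH exprSr mulrA.
Qed.
Lemma vm1X x i : psi 1 * psi x ^+ i = psi x ^+ i * psi 1.
Proof.
elim: i => [|i IH]; first by rewrite !expr0 mulr1 mul1r.
by rewrite exprSr mulrA IH -!mulrA vm1l vm1r.
Qed.
End VM.

Section FH.
Variables (F : fieldType) (A C : algType F) (f : A -> C).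
Hypothesis hf : falg_hom f.
Lemma fhD x y : f (x + y) = f x + f y. Proof. by case: hf. Qed.
Lemma fhM x y : f (x * y) = f x * f y. Proof. by case: hf. Qed.
Lemma fh1 : f 1 = 1. Proof. by case: hf. Qed.
Lemma fhZ c x : f (c *: x) = c *: f x. Proof. by case: hf. Qed.
Lemma fh0 : f 0 = 0.
Proof. have h := fhD 0 0; rewrite addr0 in h; apply: (@addrI _ (f 0)); by rewrite addr0 -h. Qed.
Lemma fhN x : f (- x) = - f x.
Proof. by apply/eqP; rewrite -subr_eq0 opprK -fhD addNr fh0. Qed.
Lemma fhB x y : f (x - y) = f x - f y. Proof. by rewrite fhD fhN. Qed.
Lemma fh_sum n (g : 'I_n -> A) : f (\sum_(i < n) g i) = \sum_(i < n) f (g i).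
Proof. exact: (big_morph f fhD fh0). Qed.
Lemma fhX x i : f (x ^+ i) = f x ^+ i.
Proof. elim: i => [|i IH]; by rewrite ?expr0 ?fh1 // !exprS fhM IH. Qed.
End FH.

Section Datum2.
Variables (F : fieldType) (E : splittingFieldType F) (rho : gal_of (fullv : {vspace E})) (zeta : F) (v : E).
Hypothesis datum : degree4_datum rho zeta v.

Local Notation coordE := (coordE datum).
Local Notation coord_rho := (coord_rho datum).
Local Notation Xv := (Xv v).

Lemma vm_expand (C : algType F) (psi : E -> C) : vertex_map (fullv : {vspace E}) psi ->
  forall x, psi x = \sum_(i < 4) coord Xv i x *: (psi 1 * psi v ^+ i).
Proof.
move=> hpsi x; rewrite {1}(coordE x) vm_sum //; apply: eq_bigr => i _.
by rewrite vmZ // vmX.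
Qed.

Lemma twist (C : algType F) (psi2 psi3 : E -> C) k (w : F) (b : C) :
  vertex_map (fullv : {vspace E}) psi2 -> vertex_map (fullv : {vspace E}) psi3 ->
  zeta ^+ k = w -> b * psi3 1 = b -> psi2 1 * b = b ->
  b * psi3 v = w *: (psi2 v * b) ->
  forall z, b * psi3 z = psi2 ((rho ^+ k)%g z) * b.
Proof.
move=> h2 h3 hw hb3 hb2 hbs z.
have hbX i : b * psi3 v ^+ i = w ^+ i *: (psi2 v ^+ i * b).
  elim: i => [|i IH]; first by rewrite !expr0 mulr1 mul1r scale1r.
  rewrite [psi3 v ^+ _.+1]exprSr (mulrA b) IH -scalerAl -mulrA hbs -scalerAr scalerA.
  by rewrite -[w ^+ i * w]exprSr mulrA -exprSr.
rewrite (vm_expand h3) (vm_expand h2) mulr_sumr mulr_suml; apply: eq_bigr => i _.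
rewrite coord_rho hw -scalerAr -scalerAl mulrA hb3 hbX scalerA.
by rewrite vm1X // -mulrA hb2.
Qed.

End Datum2.


Lemma horner_poly4 (F : fieldType) (A : algType F) (a : A) (f : nat -> F) :
  horner_alg a (\poly_(i < 4) f i) = \sum_(i < 4) f i *: a ^+ i.
Proof.
rewrite poly_def rmorph_sum; apply: eq_bigr => i _.
by rewrite -mul_polyC rmorphM /= horner_algC rmorphXn /= horner_algX mulr_algl.
Qed.

Section PhiSec.
Variables (F : fieldType) (E : splittingFieldType F) (rho : gal_of (fullv : {vspace E})) (zeta : F) (v : E).
Hypothesis datum : degree4_datum rho zeta v.
Variables (c : F) (hc : v ^+ 4 = c%:A).

Local Notation Xv := (Xv v).

Definition cpoly (x : E) : {poly F} := \poly_(i < 4) coord Xv (inord i) x.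

Lemma ev_cpoly x : horner_alg v (cpoly x) = x.
Proof.
rewrite /cpoly horner_poly4; symmetry; rewrite {1}(coordE datum x).
by apply: eq_bigr => i _; rewrite inord_val.
Qed.

Lemma cpoly_uniq (p : {poly F}) x : (size p <= 4)%N -> horner_alg v p = x -> p = cpoly x.
Proof.
move=> hs hx.
have hp : p = \poly_(i < 4) p`_i.
  apply/polyP => j; rewrite coef_poly; case: ltnP => // hj.
  by rewrite nth_default // (leq_trans hs hj).
have hx' : x = \sum_(i < 4) p`_i *: v ^+ i by rewrite -hx {1}hp horner_poly4.
rewrite {1}hp /cpoly; apply: eq_poly => i hi.
by rewrite hx' (coord_comb datum (fun j : 'I_4 => p`_j)) inordK.
Qed.

Lemma cpolyD x y : cpoly (x + y) = cpoly x + cpoly y.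
Proof.
symmetry; apply: cpoly_uniq; last by rewrite rmorphD /= !ev_cpoly.
by rewrite (leq_trans (size_polyD _ _)) // geq_max !size_poly.
Qed.

Lemma cpolyC a : cpoly a%:A = a%:P.
Proof.
symmetry; apply: cpoly_uniq; last by rewrite horner_algC.
exact: (leq_trans (size_polyC_leq1 a)).
Qed.

Lemma cpolyXn i : (i < 4)%N -> cpoly (v ^+ i) = 'X^i.
Proof.
move=> hi; symmetry; apply: cpoly_uniq; last by rewrite rmorphXn /= horner_algX.
by rewrite size_polyXn.
Qed.

Lemma cpoly0 : cpoly 0 = 0.
Proof. symmetry; apply: cpoly_uniq; by rewrite ?size_poly0 ?rmorph0. Qed.

Definition mpoly4 : {poly F} := 'X^4 - c%:P.

Lemma ev_ker p : horner_alg v p = 0 -> exists q, p = q * mpoly4.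
Proof.
move=> hp; exists (p %/ mpoly4).
have hm : horner_alg v mpoly4 = 0.
  by rewrite /mpoly4 rmorphB /= rmorphXn /= horner_algX horner_algC hc subrr.
have hr : p %% mpoly4 = 0.
  rewrite (@cpoly_uniq (p %% mpoly4) 0) ?cpoly0 //.
    have : (size (p %% mpoly4)%R < size mpoly4)%N.
      by rewrite ltn_modp -size_poly_eq0 /mpoly4 size_XnsubC.
    by rewrite /mpoly4 size_XnsubC.
  move: (congr1 (horner_alg v) (divp_eq p mpoly4)).
  by rewrite hp rmorphD rmorphM /= hm mulr0 add0r => ->.
by rewrite {1}(divp_eq p mpoly4) hr addr0.
Qed.

Variables (B : algType F) (e s : B).
Hypotheses (he : e * e = e) (hes : e * s = s) (hse : s * e = s) (hs4 : s ^+ 4 = c *: e).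

Definition phi (p : {poly F}) : B := e * horner_alg s p.
Definition Phi (x : E) : B := phi (cpoly x).

Lemma e_comm p : e * horner_alg s p = horner_alg s p * e.
Proof.
elim/poly_ind: p => [|p a IH]; first by rewrite rmorph0 mulr0 mul0r.
rewrite rmorphD rmorphM /= horner_algX horner_algC mulrDr mulrDl mulrA IH.
by rewrite -!mulrA hes hse mulr_algr mulr_algl.
Qed.

Lemma phiD p q : phi (p + q) = phi p + phi q.
Proof. by rewrite /phi rmorphD mulrDr. Qed.

Lemma phiM p q : phi (p * q) = phi p * phi q.
Proof.
rewrite /phi rmorphM /=.
set Hp := horner_alg s p; set Hq := horner_alg s q.
have -> : e * Hp * (e * Hq) = ((e * Hp) * e) * Hq by rewrite mulrA.
by rewrite -(mulrA e Hp e) -e_comm mulrA he mulrA.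
Qed.

Lemma phiC a : phi a%:P = a *: e.
Proof. by rewrite /phi horner_algC mulr_algr. Qed.

Lemma phiXn i : phi 'X^i = e * s ^+ i.
Proof. by rewrite /phi rmorphXn /= horner_algX. Qed.

Lemma phim : phi mpoly4 = 0.
Proof.
rewrite /phi /mpoly4 rmorphB /= rmorphXn /= horner_algX horner_algC mulrBr mulr_algr.
by rewrite exprS mulrA hes -exprS hs4 subrr.
Qed.

Lemma PhiD x y : Phi (x + y) = Phi x + Phi y.
Proof. by rewrite /Phi cpolyD phiD. Qed.

Lemma PhiM x y : Phi (x * y) = Phi x * Phi y.
Proof.
have [q hq] : exists q, cpoly (x * y) - cpoly x * cpoly y = q * mpoly4.
  by apply: ev_ker; rewrite rmorphB rmorphM /= !ev_cpoly subrr.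
have : cpoly (x * y) = q * mpoly4 + cpoly x * cpoly y by rewrite -hq subrK.
by rewrite /Phi; move=> ->; rewrite phiD !phiM phim mulr0 add0r.
Qed.

Lemma Phi1 : Phi 1 = e.
Proof. by rewrite /Phi -[1 : E](scale1r 1) cpolyC phiC scale1r. Qed.

Lemma PhiA a : Phi a%:A = a *: Phi 1.
Proof. by rewrite Phi1 /Phi cpolyC phiC. Qed.

Lemma Phi_vm : vertex_map (fullv : {vspace E}) Phi.
Proof. split=> [x y _ _|x y _ _|a]; [exact: PhiD | exact: PhiM | exact: PhiA]. Qed.

Lemma Phiv : Phi v = s.
Proof.
have h : cpoly v = 'X^1 := @cpolyXn 1 isT.
by rewrite /Phi h phiXn expr1 hes.
Qed.

Lemma Phi_L2 c0 c2 : Phi (c0%:A + c2 *: v ^+ 2) = c0 *: e + c2 *: (s * s).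
Proof.
rewrite PhiD PhiA Phi1 (vmZ Phi_vm) (vmX Phi_vm) Phi1 Phiv.
by rewrite expr2 mulrA hes.
Qed.

End PhiSec.

Lemma key_rel (F : fieldType) (B : algType F) (e2 s2 s3 beta Q Qi Q3 : B) (w sg : F) :
  w != 0 -> sg * sg = 1 ->
  s3 * s3 = Q3 -> beta * Q3 = (w ^+ 2) *: (Q * beta) -> s2 * s2 = Q ->
  Qi * Q = e2 -> s2 * Qi = Qi * s2 -> e2 * s2 = s2 -> e2 * beta = beta ->
  (2%:R^-1 *: (beta + sg *: (w^-1 *: (Qi * s2 * beta * s3)))) * s3 =
  (sg * w) *: (s2 * (2%:R^-1 *: (beta + sg *: (w^-1 *: (Qi * s2 * beta * s3))))).
Proof.
move=> wnz hsg hs3 hbQ hs2 hQ hsQi hes heb.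
have hsQ : s2 * Q = Q * s2 by rewrite -hs2 mulrA.
have h1 : Qi * s2 * beta * s3 * s3 = w ^+ 2 *: (s2 * beta).
  rewrite -mulrA hs3 -(mulrA (Qi * s2)) hbQ -scalerAr; congr (_ *: _).
  by rewrite !mulrA -(mulrA Qi) hsQ mulrA hQ hes.
have h2 : s2 * (Qi * s2 * beta * s3) = beta * s3.
  by rewrite !mulrA hsQi -(mulrA Qi) hs2 hQ heb.
rewrite -scalerAl mulrDl -!scalerAl h1 -scalerAr mulrDr -!scalerAr h2.
rewrite !scalerA !scalerDr !scalerA addrC; congr (_ *: _ + _ *: _).
  rewrite [RHS]mulrC; congr (_ * _).
  by rewrite expr2 mulrA -(mulrA sg) mulVf // mulr1.
have -> : sg * w / 2%:R * (sg / w) = (sg * sg) * (w / w) * 2%:R^-1 by ring.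
by rewrite hsg divff // !mul1r.
Qed.


Lemma sandwich (F : fieldType) (B : algType F) (e f x : B) :
  e * e = e -> f * f = f -> x = e * x * f -> e * x = x /\ x * f = x.
Proof.
move=> he hf hx; split.
  by rewrite {1}hx !mulrA he -hx.
by rewrite {1}hx -mulrA hf -hx.
Qed.

Lemma vm_restrict (F : fieldType) (E : splittingFieldType F) (K : {vspace E})
   (C : algType F) (psi : E -> C) :
  vertex_map (fullv : {vspace E}) psi -> vertex_map K psi.
Proof. case=> hD hM hA; split=> // x y _ _; [apply: hD | apply: hM]; exact: memvf. Qed.

Lemma back_comp (F : fieldType) (C : algType F) (P t s b0 b1 : C) (w : F) :
  w != 0 -> (2%:R : F) != 0 -> b0 * s = w *: (t * b0) -> b1 * s = (- w) *: (t * b1) ->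
  P * t * t * b0 = b0 -> P * t * t * b1 = b1 ->
  2%:R^-1 *: ((b0 + b1) + 1 *: (w^-1 *: (P * t * (b0 + b1) * s))) = b0 /\
  2%:R^-1 *: ((b0 + b1) + (-1) *: (w^-1 *: (P * t * (b0 + b1) * s))) = b1.
Proof.
move=> wnz tnz h0 h1 p0 p1.
have hM : w^-1 *: (P * t * (b0 + b1) * s) = b0 - b1.
  rewrite mulrDr mulrDl -!(mulrA (P * t)) h0 h1 -!scalerAr !mulrA p0 p1.
  by rewrite scalerDr !scalerA mulrN mulVf // scale1r scaleN1r.
rewrite hM scale1r scaleN1r opprB; split.
  rewrite addrACA subrr addr0 -mulr2n -scaler_nat scalerA mulVf //.
  by rewrite scale1r.
rewrite addrC addrA subrK -mulr2n -scaler_nat scalerA mulVf //.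
by rewrite scale1r.
Qed.

Section Datum3.
Variables (F : fieldType) (E : splittingFieldType F) (rho : gal_of (fullv : {vspace E})) (zeta : F) (v : E).
Hypothesis datum : degree4_datum rho zeta v.

Lemma comp_expand (B C : algType F) (k : B -> C) (psi : E -> B) (chi : E -> C) :
  falg_hom k -> vertex_map (fullv : {vspace E}) psi -> vertex_map (fullv : {vspace E}) chi ->
  k (psi 1) = chi 1 -> k (psi v) = chi v -> forall x, k (psi x) = chi x.
Proof.
move=> hk hpsi hchi h1 hv x.
rewrite (vm_expand datum hpsi) (vm_expand datum hchi) (fh_sum hk).
by apply: eq_bigr => i _; rewrite (fhZ hk) (fhM hk) (fhX hk) h1 hv.
Qed.

Lemma galN (g : gal_of (fullv : {vspace E})) x : g (- x) = - g x.
Proof. exact: rmorphN. Qed.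
Lemma galV (g : gal_of (fullv : {vspace E})) x : g (x^-1) = (g x)^-1.
Proof. exact: fmorphV. Qed.

Lemma vmL_Z (C : algType F) (psi : E -> C) : vertex_map (LL v) psi ->
  forall a y, y \in LL v -> psi (a *: y) = a *: psi y.
Proof.
case=> hD hM hA a y Ly.
rewrite -mulr_algl hM ?(memvZ _ (L1 v)) // hA -scalerAl -hM ?L1 //.
by rewrite mul1r.
Qed.

Lemma vmL1 (C : algType F) (psi : E -> C) : vertex_map (LL v) psi ->
  forall z, z \in LL v -> psi 1 * psi z = psi z.
Proof. by case=> hD hM hA z Lz; rewrite -hM ?L1 // mul1r. Qed.

Lemma vmL_dec (C : algType F) (psi : E -> C) : vertex_map (LL v) psi ->
  forall c0 c2, psi (c0%:A + c2 *: v ^+ 2) = c0 *: psi 1 + c2 *: psi (uu v).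
Proof.
move=> hL c0 c2; have hL' := hL; case: hL' => hD hM hA.
rewrite hD ?hA ?(memvZ _ (L1 v)) ?(memvZ _ (Lu v)) //.
by rewrite (vmL_Z hL) ?Lu.
Qed.

Lemma Lmem c0 c2 : c0%:A + c2 *: v ^+ 2 \in LL v.
Proof. exact: memvD (memvZ _ (L1 v)) (memvZ _ (Lu v)). Qed.

Lemma rhoL k z : z \in LL v -> (rho ^+ k)%g z \in LL v.
Proof.
move=> /(L_decomp datum) [c0 [c2 ->]].
rewrite galD gal_alg gal_scale galX (rhoXv datum) exprMn -inalgX mulr_algl scalerA.
exact: Lmem.
Qed.

Lemma rho_u k : (rho ^+ k)%g (uu v) = ((zeta ^+ k) ^+ 2) *: uu v.
Proof. by rewrite /uu galX (rhoXv datum) exprMn -inalgX mulr_algl. Qed.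

Lemma uinv : (uu v)^-1 \in LL v.
Proof.
have [c hc] := v4F datum.
have unz : uu v != 0 by rewrite /uu expf_neq0 // (v_nz datum).
have hu2 : uu v * uu v = c%:A by rewrite /uu -exprD hc.
have cnz : c != 0.
  apply/eqP => c0; move: hu2; rewrite c0 scale0r => /eqP.
  by rewrite mulf_eq0 orbb (negPf unz).
have -> : (uu v)^-1 = c^-1 *: uu v.
  apply: (mulfI unz); rewrite mulfV // -scalerAr hu2 scalerA mulVf //.
  by rewrite scale1r.
exact: memvZ _ (Lu v).
Qed.

Lemma galinv l :
  ((rho ^+ (l + 2))^-1)%g (v^-1) = - ((rho ^+ l)^-1)%g (v^-1).
Proof.
have gK (g : gal_of (fullv : {vspace E})) x : (g^-1)%g (g x) = x.
  by rewrite -galM ?memvf // mulgV gal_id.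
have h2 : (rho ^+ 2)%g (- v^-1) = v^-1.
  by rewrite galN galV (rhoXv datum) (zeta2 datum) scaleN1r mulN1r invrN opprK.
have h3 : ((rho ^+ 2)^-1)%g (v^-1) = - v^-1 by rewrite -{1}h2 gK.
by rewrite expgD invMg galM ?memvf // h3 galN.
Qed.

End Datum3.


Unset Implicit Arguments. Set Strict Implicit. Set Printing Implicit Defensive.

Theorem proposition4p3 (F : fieldType) (E : splittingFieldType F)
    (rho : gal_of (fullv : {vspace E})) (zeta : F) (v : E)
    (datum : degree4_datum rho zeta v)
    (xa xb xg : 'Z_2) (hxi : xa + xb + xg = 0)
    (l : nat) (hl : (l < 2)%N) (hlb : (l = xb %[mod 2])%N)
    (B' : algType F) (d' : gens1 E B') (HB' : is_Lambda' rho v xa xb xg l d')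
    (B : algType F) (d : gens2 E B) (HB : is_Lambda rho v xa xb xg d) :
  exists f : B' -> B,
    [/\ falg_hom f, bijective f,
        f (p2 d' v) = br_s2 d /\ f (p3 d' v) = br_s3 d,
        f (ar_a d') = br_a d /\ f (ar_g d') = br_g d &
        f (ar_b0 d' + ar_b1 d') = br_b d].
Proof.
have [c hc] := v4F datum.
have hxb : (xb < 2)%N := ltn_ord xb.
have hl' : l = xb :> nat.
  by move: hlb; rewrite (modn_small hl) (modn_small hxb).
have two_nzE : (2%:R : E) != 0.
  by rewrite -scaler_nat alg_eq0 (two_nz datum).
have L1' := L1 v; have Lu' := Lu v; have Lui := uinv datum.
case: HB' => R1 U1; case: HB => R2 U2.
have R1' := R1; have R2' := R2.
case: R1' => [[vp1 vp2 vp3 id1] [pa pb0 pb1 pg] [ra rb0 rb1 rg] [z1 z2 z3 z4]].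
case: R2' => [[vq1 vq2 vq3 id2] [qa qb qg qs2 qs3] [sa sb sgr ss2 ss3] [y1 y2 y3 y4 y5]].
have hll z : z \in LL v -> (rho ^+ (l + 2))%g z = (rho ^+ l)%g z.
  by move=> Lz; rewrite addnC expgD galM ?memvf // (tau_L datum Lz).
have ga0 : ar_g d' * ar_a d' = 0.
  have hw2 := galinv datum l.
  rewrite hw2 (vmN vp3) in z3.
  set X := ar_g d' * ar_a d'.
  set P := p3 d' (((rho ^+ l)^-1)%g v^-1).
  have h1 : p3 d' (2%:R^-1) * (X + X) = 0.
    have -> : X + X = (X + P * ar_g d' * ar_a d' * p2 d' v) + (X + - P * ar_g d' * ar_a d' * p2 d' v).
      by rewrite !mulNr addrACA subrr addr0.
    by rewrite mulrDr z2 z3 addr0.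
  have h2 : p3 d' 1 * (X + X) = 0.
    by rewrite -[1 : E](mulfV two_nzE) (vmM vp3) -mulrA h1 mulr0.
  have [hg3 _] := sandwich (vm1l vp3 1) (vmL1 vp1 L1') pg.
  move: h2; rewrite mulrDr /X mulrA hg3 -/X => /eqP.
  by rewrite -mulr2n -scaler_nat scaler_eq0 (negPf (two_nz datum)) => /eqP.
pose dC := Gens2 (p1 d') (p2 d') (p3 d') (ar_a d') (ar_b0 d' + ar_b1 d') (ar_g d')
   (p2 d' v) (p3 d' v).
have RC : rels2 rho v xa xb xg dC.
  rewrite /rels2 /=; split.
  - by split=> //; apply: vm_restrict.
  - split=> //.
    + by rewrite mulrDr mulrDl -pb0 -pb1.
    + by rewrite (vm1l vp2) (vm1r vp2).
    + by rewrite (vm1l vp3) (vm1r vp3).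
  - split=> //.
    + move=> z Lz; rewrite mulrDl rb0 rb1 mulrDr hll //.
      by rewrite hl'.
    + by move=> z _; rewrite -!(vmM vp2) mulrC.
    + by move=> z _; rewrite -!(vmM vp3) mulrC.
  - split=> //.
    + by rewrite /uu expr2 (vmM vp2) subrr.
    + by rewrite /uu expr2 (vmM vp3) subrr.
have [[k [hk agk]] _] := U2 B' dC RC.
set e2 := q2 d 1; set e3 := q3 d 1; set s2 := br_s2 d; set s3 := br_s3 d.
set be := br_b d.
have he2 : e2 * e2 = e2 by rewrite /e2 (vmL1 vq2).
have he3 : e3 * e3 = e3 by rewrite /e3 (vmL1 vq3).
have [hes2 hse2] := sandwich he2 he2 qs2.
have [hes3 hse3] := sandwich he3 he3 qs3.
have hs2sq : s2 * s2 = q2 d (uu v) by apply/eqP; rewrite -subr_eq0 y4.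
have hs3sq : s3 * s3 = q3 d (uu v) by apply/eqP; rewrite -subr_eq0 y5.
have huu : uu v * uu v = c%:A by rewrite /uu -exprD hc.
have hs24 : s2 ^+ 4 = c *: e2.
  have -> : s2 ^+ 4 = (s2 * s2) * (s2 * s2) by rewrite -[4%N]/(2 + 2)%N exprD expr2.
  by case: vq2 => _ hM hA; rewrite hs2sq -hM // huu hA.
have hs34 : s3 ^+ 4 = c *: e3.
  have -> : s3 ^+ 4 = (s3 * s3) * (s3 * s3) by rewrite -[4%N]/(2 + 2)%N exprD expr2.
  by case: vq3 => _ hM hA; rewrite hs3sq -hM // huu hA.
pose P2 := Phi v e2 s2; pose P3 := Phi v e3 s3.
have vmP2 : vertex_map (fullv : {vspace E}) P2 := Phi_vm datum hc he2 hes2 hse2 hs24.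
have vmP3 : vertex_map (fullv : {vspace E}) P3 := Phi_vm datum hc he3 hes3 hse3 hs34.
have P2_1 : P2 1 = e2 := Phi1 datum e2 s2.
have P3_1 : P3 1 = e3 := Phi1 datum e3 s3.
have P2v : P2 v = s2 := Phiv datum hes2.
have P3v : P3 v = s3 := Phiv datum hes3.
have PL2 z : z \in LL v -> P2 z = q2 d z.
  move=> /(L_decomp datum) [c0 [c2 ->]].
  by rewrite /P2 (Phi_L2 datum hc he2 hes2 hse2 hs24) (vmL_dec vq2) hs2sq.
have PL3 z : z \in LL v -> P3 z = q3 d z.
  move=> /(L_decomp datum) [c0 [c2 ->]].
  by rewrite /P3 (Phi_L2 datum hc he3 hes3 hse3 hs34) (vmL_dec vq3) hs3sq.
set w := zeta ^+ l.
have wnz : w != 0 by rewrite expf_neq0 // (zeta_nz datum).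
set Qi := q2 d (uu v)^-1.
set M := Qi * s2 * be * s3.
pose b0 := 2%:R^-1 *: (be + 1 *: (w^-1 *: M)).
pose b1 := 2%:R^-1 *: (be + (-1) *: (w^-1 *: M)).
have sum01 : b0 + b1 = be.
  rewrite /b0 /b1 -scalerDr scale1r scaleN1r addrACA subrr addr0.
  by rewrite -mulr2n -scaler_nat scalerA mulVf ?(two_nz datum) // scale1r.
have [heb hbe] := sandwich he2 he3 qb.
have hQi : e2 * Qi = Qi by rewrite /e2 /Qi (vmL1 vq2).
have sandM : e2 * M * e3 = M by rewrite /M !mulrA hQi -mulrA hse3.
have sandb (sg : F) : 2%:R^-1 *: (be + sg *: (w^-1 *: M)) =
    e2 * (2%:R^-1 *: (be + sg *: (w^-1 *: M))) * e3.
  rewrite -scalerAr -scalerAl mulrDr mulrDl -!scalerAr -!scalerAl.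
  by rewrite -qb sandM.
have hbQ : be * q3 d (uu v) = w ^+ 2 *: (q2 d (uu v) * be).
  rewrite sb // (rho_u datum) -hl' (vmL_Z vq2) // scalerAl.
  by [].
have hQQ : Qi * q2 d (uu v) = e2.
  have unz : uu v != 0 by rewrite /uu expf_neq0 // (v_nz datum).
  by case: vq2 => _ hM _; rewrite /Qi -hM // mulVf.
have hsQi : s2 * Qi = Qi * s2 by rewrite /Qi ss2.
have key (sg : F) : sg * sg = 1 ->
   (2%:R^-1 *: (be + sg *: (w^-1 *: M))) * s3 =
   (sg * w) *: (s2 * (2%:R^-1 *: (be + sg *: (w^-1 *: M)))).
  by move=> hsg; exact: (key_rel wnz hsg hs3sq hbQ hs2sq hQQ hsQi hes2 heb).
have tw (sg : F) (kk : nat) : sg * sg = 1 -> zeta ^+ kk = sg * w ->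
   forall z, (2%:R^-1 *: (be + sg *: (w^-1 *: M))) * P3 z =
             P2 ((rho ^+ kk)%g z) * (2%:R^-1 *: (be + sg *: (w^-1 *: M))).
  move=> hsg hk' z; apply: (twist datum vmP2 vmP3 hk').
  - by rewrite P3_1 {1}(sandb sg) -mulrA he3 -(sandb sg).
  - by rewrite P2_1 {1}(sandb sg) !mulrA he2 -(sandb sg).
  - by rewrite P3v P2v key.
pose dD := Gens1 (q1 d) P2 P3 (br_a d) b0 b1 (br_g d).
have RD : rels1 rho v xa xb xg l dD.
  rewrite /rels1 /=; split.
  - by split=> //; rewrite P2_1 P3_1.
  - split.
    + by rewrite P2_1.
    + by rewrite P2_1 P3_1 /b0; apply: sandb.
    + by rewrite P2_1 P3_1 /b1; apply: sandb.
    + by rewrite P3_1.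
  - split.
    + by move=> z Lz; rewrite PL2 // sa.
    + by apply: tw; rewrite ?mulr1 ?mul1r.
    + by apply: tw; rewrite ?mulrNN ?mulr1 // exprD (zeta2 datum) mulrC.
    + move=> z Lz; rewrite PL3 ?sgr //.
      exact: (@rhoL _ _ _ _ _ datum xg z Lz).
  - split.
    + by rewrite sum01.
    + by rewrite y3 add0r -(mulrA (P3 _)) y3 mulr0 mul0r mulr0.
    + by rewrite y3 add0r -(mulrA (P3 _)) y3 mulr0 mul0r mulr0.
    + by rewrite sum01.
have [[h [hh agh]] _] := U1 B dD RD.
case: agh => /= ah1 ah2 ah3 [ah_a ah_b0 ah_b1 ah_g].
case: agk => /= ak1 ak2 ak3 [ak_a ak_b ak_g ak_s2 ak_s3].
have falg_comp (X Y Z : algType F) (f1 : X -> Y) (f2 : Y -> Z) :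
    falg_hom f1 -> falg_hom f2 -> falg_hom (f2 \o f1).
  move=> h1 h2; split=> /=.
  - by move=> x y; rewrite (fhD h1) (fhD h2).
  - by move=> x y; rewrite (fhM h1) (fhM h2).
  - by rewrite (fh1 h1) (fh1 h2).
  - by move=> a x; rewrite (fhZ h1) (fhZ h2).
have falg_id (X : algType F) : falg_hom (@id X) by split.
have unz : uu v != 0 by rewrite /uu expf_neq0 // (v_nz datum).
have hb0s : ar_b0 d' * p3 d' v = w *: (p2 d' v * ar_b0 d').
  by rewrite rb0 (rhoXv datum) mulr_algl (vmZ vp2) -scalerAl.
have hb1s : ar_b1 d' * p3 d' v = (- w) *: (p2 d' v * ar_b1 d').
  rewrite rb1 (rhoXv datum) exprD (zeta2 datum) mulrN1 mulr_algl (vmZ vp2).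
  by rewrite -scalerAl.
have [hb0l _] := sandwich (vm1l vp2 1) (vm1l vp3 1) pb0.
have [hb1l _] := sandwich (vm1l vp2 1) (vm1l vp3 1) pb1.
have hPt : p2 d' (uu v)^-1 * p2 d' v * p2 d' v = p2 d' 1.
  by rewrite -!(vmM vp2) -mulrA -expr2 mulVf.
have hp0 : p2 d' (uu v)^-1 * p2 d' v * p2 d' v * ar_b0 d' = ar_b0 d' by rewrite hPt hb0l.
have hp1 : p2 d' (uu v)^-1 * p2 d' v * p2 d' v * ar_b1 d' = ar_b1 d' by rewrite hPt hb1l.
have [bc0 bc1] := back_comp wnz (two_nz datum) hb0s hb1s hp0 hp1.
have ag_id1 : agree1 v id d' d'.
  by split; [move=> ? ? | move=> ? | move=> ? | split].
have ag_id2 : agree2 v id d d.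
  by split; [move=> ? ? | move=> ? ? | move=> ? ? | split].
have khK : cancel h k.
  have [_ uniq1] := U1 B' d' R1.
  move=> x; apply: (uniq1 (k \o h) id (falg_comp _ _ _ _ _ hh hk) _ (falg_id B') ag_id1).
  split=> /=.
  - by move=> z Lz; rewrite ah1 // ak1.
  - move=> z; rewrite ah2; apply: (comp_expand datum hk vmP2 vp2).
      by rewrite P2_1 ak2.
    by rewrite P2v.
  - move=> z; rewrite ah3; apply: (comp_expand datum hk vmP3 vp3).
      by rewrite P3_1 ak3.
    by rewrite P3v.
  - split.
    + by rewrite ah_a ak_a.
    + rewrite ah_b0 /b0 (fhZ hk) (fhD hk) !(fhZ hk) /M !(fhM hk) ak_b ak_s2 ak_s3 /Qi (ak2 _ Lui).
      exact: bc0.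
    + rewrite ah_b1 /b1 (fhZ hk) (fhD hk) !(fhZ hk) /M !(fhM hk) ak_b ak_s2 ak_s3 /Qi (ak2 _ Lui).
      exact: bc1.
    + by rewrite ah_g ak_g.
have hkK : cancel k h.
  have [_ uniq2] := U2 B d R2.
  move=> x; apply: (uniq2 (h \o k) id (falg_comp _ _ _ _ _ hk hh) _ (falg_id B) ag_id2).
  split=> /=.
  - by move=> z Lz; rewrite ak1 // ah1.
  - by move=> z Lz; rewrite ak2 // ah2 PL2.
  - by move=> z Lz; rewrite ak3 // ah3 PL3.
  - split.
    + by rewrite ak_a ah_a.
    + by rewrite ak_b (fhD hh) ah_b0 ah_b1 sum01.
    + by rewrite ak_g ah_g.
    + by rewrite ak_s2 ah2 P2v.
    + by rewrite ak_s3 ah3 P3v.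
exists h; split=> //.
- by exists k.
- by split; [rewrite ah2 P2v | rewrite ah3 P3v].
- by rewrite (fhD hh) ah_b0 ah_b1 sum01.
Qed.
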